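(* Let $G$ be a group and let $A\subseteq \operatorname{Aut}(G)$ be a subgroup of automorphisms, and regard $G$ as an $\mathcal{L}(A)$-group. Then $G$ is an $\mathcal{L}(A)$-equational domain if and only if there do not exist $a,b\in G$ with $a\neq 1$, $b\neq 1$ such that $[a,\phi(b)]=1$ for every $\phi\in A$.
   Context: $\mathcal{L}(A)=\{\cdot,{}^{-1},1\}\cup\{\phi\mid \phi\in A\}$ is the group language extended by unary function symbols, one for each $\phi\in A$, interpreted in $G$ as the automorphism $\phi$. An $\mathcal{L}(A)$-term in variables $X=\{x_1,\dots,x_n\}$ is a term of this language; up to equivalence it is a product $\phi_1(x_{i_1}^{\varepsilon_1})\cdots\phi_k(x_{i_k}^{\varepsilon_k})$ with $\phi_j\in A$, $\varepsilon_j\in\{-1,1\}$. An $\mathcal{L}(A)$-equation is $t(X)=1$ for an $\mathcal{L}(A)$-term $t$; an $\mathcal{L}(A)$-system is any set of such equations, and $V_G(S)\subseteq G^n$ denotes its solution set. A subset of $G^n$ is $\mathcal{L}(A)$-algebraic if it equals $V_G(S)$ for some $\mathcal{L}(A)$-system $S$ in $n$ variables. $G$ is an $\mathcal{L}(A)$-equational domain if for every $n$ and all $\mathcal{L}(A)$-algebraic $Y_1,Y_2\subseteq G^n$, the union $Y_1\cup Y_2$ is $\mathcal{L}(A)$-algebraic. Here $[x,y]=x^{-1}y^{-1}xy$. *)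

(* Defs.v *)
From mathcomp Require Import ssreflect ssrfun ssrbool eqtype ssrnat fintype.
Set Implicit Arguments. Unset Strict Implicit.

Record group := Group {
  carrier :> Type;
  gmul : carrier -> carrier -> carrier;
  ginv : carrier -> carrier;
  gone : carrier;
  gmulA : forall x y z, gmul x (gmul y z) = gmul (gmul x y) z;
  gmul1 : forall x, gmul gone x = x;
  gmulV : forall x, gmul (ginv x) x = gone
}.

Definition comm (G : group) (x y : G) : G :=
  gmul (gmul (gmul (ginv x) (ginv y)) x) y.

Definition is_aut (G : group) (phi : G -> G) : Prop :=
  (forall x y, phi (gmul x y) = gmul (phi x) (phi y)) /\ bijective phi.

Definition aut_subgroup (G : group) (A : (G -> G) -> Prop) : Prop :=
  [/\ forall phi, A phi -> is_aut phi,
      A (fun x => x),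
      forall phi psi, A phi -> A psi -> A (phi \o psi)
    & forall phi, A phi -> exists2 psi, A psi & cancel phi psi /\ cancel psi phi].

(* L(A)-terms in the variables x_0, ..., x_{n-1}: function symbols are
   the group operations and one unary symbol for each phi in A. *)
Inductive LTerm (G : group) (A : (G -> G) -> Prop) (n : nat) : Type :=
  | TVar of 'I_n
  | TOne
  | TMul of LTerm A n & LTerm A n
  | TInv of LTerm A n
  | TApp (phi : {f : G -> G | A f}) of LTerm A n.

Fixpoint teval (G : group) (A : (G -> G) -> Prop) (n : nat) (p : 'I_n -> G)
    (t : LTerm A n) : G :=
  match t with
  | TVar i => p i
  | TOne => gone G
  | TMul t1 t2 => gmul (teval p t1) (teval p t2)
  | TInv t1 => ginv (teval p t1)
  | TApp phi t1 => proj1_sig phi (teval p t1)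
  end.

(* An L(A)-system S is a set of equations t = 1 (identified with the set of
   terms t); V_G(S) is its solution set in G^n. *)
Definition VG (G : group) (A : (G -> G) -> Prop) (n : nat)
    (S : LTerm A n -> Prop) : ('I_n -> G) -> Prop :=
  fun p => forall t, S t -> teval p t = gone G.

Definition algebraic (G : group) (A : (G -> G) -> Prop) (n : nat)
    (Y : ('I_n -> G) -> Prop) : Prop :=
  exists S : LTerm A n -> Prop, forall p, Y p <-> VG S p.

Definition equational_domain (G : group) (A : (G -> G) -> Prop) : Prop :=
  forall (n : nat) (Y1 Y2 : ('I_n -> G) -> Prop),
    algebraic A Y1 -> algebraic A Y2 ->
    algebraic A (fun p => Y1 p \/ Y2 p).

(* Main.v *)
Require Import Defs.
From mathcomp Require Import ssreflect ssrfun ssrbool eqtype ssrnat fintype.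
From Stdlib Require Import Classical.

Section GroupFacts.
Variable G : group.
Local Notation "x * y" := (gmul x y).
Local Notation "x ^-1" := (ginv x).
Local Notation one := (gone G).

Lemma mulV (x : G) : x * x^-1 = one.
Proof.
rewrite -[x * _]gmul1 -[in X in X * _](gmulV (x^-1)).
by rewrite -gmulA [x^-1 * _]gmulA gmulV gmul1 gmulV.
Qed.

Lemma mul1r (x : G) : x * one = x.
Proof. by rewrite -(gmulV x) gmulA mulV gmul1. Qed.

Lemma mulKl (x y : G) : x^-1 * (x * y) = y.
Proof. by rewrite gmulA gmulV gmul1. Qed.

Lemma inv_uniq (x y : G) : x * y = one -> y = x^-1.
Proof. by move=> h; rewrite -(mulKl x y) h mul1r. Qed.

Lemma invM (x y : G) : (x * y)^-1 = y^-1 * x^-1.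
Proof.
symmetry; apply: inv_uniq.
by rewrite -gmulA [y * _]gmulA mulV gmul1 mulV.
Qed.

Lemma invK (x : G) : (x^-1)^-1 = x.
Proof. by symmetry; apply: inv_uniq; rewrite gmulV. Qed.

Lemma inv1 : one^-1 = one.
Proof. by symmetry; apply: inv_uniq; rewrite mul1r. Qed.

Definition commute (u v : G) := u * v = v * u.

Lemma commM u v w : commute u v -> commute u w -> commute u (v * w).
Proof. by rewrite /commute => h1 h2; rewrite gmulA h1 -gmulA h2 gmulA. Qed.

Lemma commV u v : commute u v -> commute u v^-1.
Proof.
rewrite /commute => h.
have : v^-1 * (u * v) * v^-1 = v^-1 * (v * u) * v^-1 by rewrite h.
by rewrite mulKl -[v^-1 * (u * v) * _]gmulA -[(u * v) * _]gmulA mulV mul1r => ->.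
Qed.

Lemma comm1 u : commute u one.
Proof. by rewrite /commute gmul1 mul1r. Qed.

Lemma commC u v : commute u v -> commute v u.
Proof. by []. Qed.

Lemma comm_eq1 u v : comm u v = one <-> commute u v.
Proof.
rewrite /comm /commute; split => h.
- have h' : (u^-1 * v^-1) * (u * v) = one by rewrite !gmulA.
  by rewrite (inv_uniq _ _ h') invM !invK.
- by rewrite -gmulA h !gmulA -[u^-1 * v^-1 * v]gmulA gmulV mul1r gmulV.
Qed.

Lemma aut1 (phi : G -> G) : is_aut phi -> phi one = one.
Proof.
case=> hm _.
have h : phi one * phi one = phi one by rewrite -hm gmul1.
by rewrite -(mulKl (phi one) (phi one)) h gmulV.
Qed.

Lemma autV (phi : G -> G) x : is_aut phi -> phi x^-1 = (phi x)^-1.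
Proof.
move=> ha; apply: inv_uniq; case: (ha) => hm _.
by rewrite -hm mulV aut1.
Qed.

Lemma aut_commute (phi : G -> G) u v : is_aut phi -> commute u v ->
  commute (phi u) (phi v).
Proof. by case=> hm _; rewrite /commute -!hm => ->. Qed.

Lemma comm_a1 a : comm a one = one.
Proof. by apply/comm_eq1/comm1. Qed.

Lemma comm_1b b : comm one b = one.
Proof. by apply/comm_eq1/commC/comm1. Qed.

End GroupFacts.
Arguments commute {G}.
Arguments aut_commute {G}.
Arguments comm_eq1 {G}.
Arguments comm1 {G}.


Section Dir1.
Variables (G : group) (A : (G -> G) -> Prop) (hA : aut_subgroup A) (a b : G).
Hypothesis hab : forall phi, A phi -> comm a (phi b) = gone G.

Definition Q v := forall phi, A phi -> commute (phi a) v.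
Definition R u := forall v, Q v -> commute u v.

Lemma Q_app psi v : A psi -> Q v -> Q (psi v).
Proof.
case: hA => haut hid hcomp hinv hpsi hv phi hphi.
case: (hinv _ hpsi) => psi' hpsi' [c1 c2].
have := hv _ (hcomp _ _ hpsi' hphi) => /= h.
have := aut_commute _ _ _ (haut _ hpsi) h.
by rewrite c2.
Qed.

Lemma R_app psi u : A psi -> R u -> R (psi u).
Proof.
case: hA => haut hid hcomp hinv hpsi hu v hv.
case: (hinv _ hpsi) => psi' hpsi' [c1 c2].
have := hu _ (Q_app _ _ hpsi' hv) => h.
have := aut_commute _ _ _ (haut _ hpsi) h.
by rewrite c2.
Qed.

Lemma Qb : Q b.
Proof.
case: hA => haut hid hcomp hinv phi hphi.
case: (hinv _ hphi) => phi' hphi' [c1 c2].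
have := proj1 (comm_eq1 _ _) (hab _ hphi').
move/(aut_commute _ _ _ (haut _ hphi)).
by rewrite c2.
Qed.

Lemma Ra : R a.
Proof. by case: hA => haut hid _ _ v hv; apply: (hv _ hid). Qed.

Lemma Q_teval n (p : 'I_n -> G) (t : LTerm A n) :
  (forall i, Q (p i)) -> Q (teval p t).
Proof.
move=> hp; elim: t => /=.
- exact: hp.
- by move=> phi _; apply: comm1.
- by move=> t1 h1 t2 h2 phi hphi; apply: commM; [apply: h1|apply: h2].
- by move=> t1 h1 phi hphi; apply: commV; apply: h1.
- by move=> [f hf] t1 h1 /=; apply: Q_app.
Qed.

Lemma R_teval n (p : 'I_n -> G) (t : LTerm A n) :
  (forall i, R (p i)) -> R (teval p t).
Proof.
move=> hp; elim: t => /=.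
- exact: hp.
- by move=> v _; apply: commC; apply: comm1.
- move=> t1 h1 t2 h2 v hv; apply: commC; apply: commM; apply: commC;
  [apply: h1|apply: h2]; done.
- by move=> t1 h1 v hv; apply: commC; apply: commV; apply: commC; apply: h1.
- by move=> [f hf] t1 h1 /=; apply: R_app.
Qed.

Lemma teval_split n (p pa pb : 'I_n -> G) (t : LTerm A n) :
  (forall i, p i = gmul (pa i) (pb i)) ->
  (forall i, R (pa i)) -> (forall i, Q (pb i)) ->
  teval p t = gmul (teval pa t) (teval pb t).
Proof.
move=> hp ha hb; elim: t => /=.
- exact: hp.
- by rewrite gmul1.
- move=> t1 -> t2 ->.
  have hc : commute (teval pb t1) (teval pa t2)
    by apply: commC; apply: R_teval => //; apply: Q_teval.
  by rewrite -!gmulA [gmul (teval pb t1) _]gmulA hc -gmulA.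
- move=> t1 ->.
  have hc : commute (teval pa t1) (teval pb t1) by apply: R_teval => //; apply: Q_teval.
  by rewrite invM; apply: commV; apply: commC; apply: commV.
- move=> [f hf] t1 -> /=.
  by case: hA => haut _ _ _; case: (haut _ hf) => hm _; rewrite hm.
Qed.

End Dir1.

Theorem theorem3 (G : group) (A : (G -> G) -> Prop) (hA : aut_subgroup A) :
  equational_domain A <->
  ~ (exists a b : G, a <> gone G /\ b <> gone G /\
       forall phi, A phi -> comm a (phi b) = gone G).
Proof.
split.
- move=> hED [a [b [ha [hb hab]]]].
  pose i0 : 'I_2 := @Ordinal 2 0 isT.
  pose i1 : 'I_2 := @Ordinal 2 1 isT.
  have alg0 : forall i : 'I_2, algebraic A (fun p => p i = gone G).
    move=> i; exists (fun t => t = TVar A i) => p; split.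
    + by move=> h t ->.
    + by move=> h; apply: (h (TVar A i)).
  case: (hED 2 _ _ (alg0 i0) (alg0 i1)) => S hS.
  pose p := fun i : 'I_2 => if val i == 0 then a else b.
  pose pa := fun i : 'I_2 => if val i == 0 then a else gone G.
  pose pb := fun i : 'I_2 => if val i == 0 then gone G else b.
  have hp : p i0 = gone G \/ p i1 = gone G.
    apply/hS => t ht.
    rewrite (@teval_split G A hA a 2 p pa pb t).
    + have -> : teval pa t = gone G by apply: (proj1 (hS pa)) => //; right.
      have -> : teval pb t = gone G by apply: (proj1 (hS pb)) => //; left.
      by rewrite gmul1.
    + by move=> i; rewrite /p /pa /pb; case: ifP => _; rewrite ?mul1r ?gmul1.
    + move=> i; rewrite /pa; case: ifP => _; first exact: (@Ra G A hA a).
      by move=> v _; apply: commC; apply: comm1.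
    + move=> i; rewrite /pb; case: ifP => _; last exact: (@Qb G A hA a b hab).
      by move=> phi _; apply: comm1.
  by case: hp.
- move=> hno n Y1 Y2 [S1 h1] [S2 h2].
  exists (fun t => exists t1 t2 (phi : {f : G -> G | A f}), S1 t1 /\ S2 t2 /\
    t = TMul (TMul (TMul (TInv t1) (TInv (TApp phi t2))) t1) (TApp phi t2)).
  move=> p; split.
  + move=> hY t [t1 [t2 [phi [s1 [s2 ->]]]]].
    change (comm (teval p t1) (teval p (TApp phi t2)) = gone G).
    case: hY => hY.
    * by rewrite (proj1 (h1 p) hY t1 s1) comm_1b.
    * rewrite /= (proj1 (h2 p) hY t2 s2).
      case: hA => haut _ _ _; case: phi => f hf /=.
      by rewrite aut1 ?comm_a1 //; apply: haut.
  + move=> hV; apply: NNPP => hn.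
    apply: hno.
    have n1 : ~ (forall t, S1 t -> teval p t = gone G)
      by move=> h; apply: hn; left; apply/h1.
    have n2 : ~ (forall t, S2 t -> teval p t = gone G)
      by move=> h; apply: hn; right; apply/h2.
    case: (not_all_ex_not _ _ n1) => t1 h1'; case: (imply_to_and _ _ h1') => s1 e1.
    case: (not_all_ex_not _ _ n2) => t2 h2'; case: (imply_to_and _ _ h2') => s2 e2.
    exists (teval p t1), (teval p t2); do 2 (split => //).
    move=> phi hphi.
    exact: (hV _ (ex_intro _ t1 (ex_intro _ t2 (ex_intro _ (exist _ phi hphi)
      (conj s1 (conj s2 erefl)))))).
Qed.
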